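(* Let $(A,\succ,\prec)$ be an anti-pre-Novikov algebra and $s\in A\otimes A$. Then $s$ is invariant if and only if for all $x\in A$, $\zeta\in A^*$: $L_{\star}(x)T_s(\zeta)+T_s(L_{\succ}^*(x)\zeta)=0$ and $L_{\odot}(x)T_s(\zeta)+T_s(L_{\circ}^*(x)\zeta)=0$. Moreover, these two identities hold (for all $x,\zeta$) if and only if for all $\zeta,\eta\in A^*$: $L_{\star}^*(T_s(\zeta))\eta=R_{\succ}^*(T_{\tau(s)}(\eta))\zeta$ and $R_{\odot}^*(T_s(\zeta))\eta=R_{\circ}^*(T_{\tau(s)}(\eta))\zeta$.
   Context: $A$ is finite-dimensional over a field $k$. An anti-pre-Novikov algebra is $(A,\succ,\prec)$ such that with $x\circ y=x\succ y+x\prec y$: $(x\circ y-y\circ x)\succ z=y\succ(x\succ z)-x\succ(y\succ z)$; $x\prec(y\circ z)=(y\succ x)\prec z-(x\prec y)\prec z-y\succ(x\prec z)$; $(x\circ y)\succ z=-(x\succ z)\prec y$; $(x\prec y)\prec z=(x\prec z)\prec y$; $(x\circ y-y\circ x)\prec z=x\succ(y\circ z)-y\succ(x\circ z)$. Notation: $L_\ast(x)y=x\ast y$, $R_\ast(x)y=y\ast x$ for $\ast\in\{\succ,\prec,\circ\}$; $L_{\star}=L_{\circ}+R_{\circ}$, $L_{\odot}=L_{\succ}+R_{\prec}$, $R_{\odot}=R_{\succ}+L_{\prec}$; for $f:A\to\mathrm{End}(A)$, $\langle f^*(x)\zeta,y\rangle=-\langle\zeta,f(x)y\rangle$; $\tau$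 is the flip; $T_s:A^*\to A$, $\langle T_s(\zeta),\eta\rangle=\langle s,\zeta\otimes\eta\rangle$. $s$ is called invariant if $(I\otimes L_{\star}(x)-L_{\succ}(x)\otimes I)s=0$ and $(L_{\circ}(x)\otimes I-I\otimes L_{\odot}(x))s=0$ for all $x\in A$. *)

(* Defs.v *)
From HB Require Import structures.
From mathcomp Require Import all_boot all_order all_algebra.
Set Implicit Arguments. Unset Strict Implicit. Unset Printing Implicit Defensive.
Import GRing.Theory.
Local Open Scope ring_scope.

(* Conventions: a finite-dimensional k-space A is identified with
   k^n = 'rV[K]_n (standard basis ebase i); A^* is identified with 'rV[K]_n via
   the standard pairing <zeta, y> = sum_i zeta_i y_i; A (x) A is identified with
   'M[K]_n, the matrix s standing for sum_{i,j} s i j e_i (x) e_j. *)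

Section APN.
Variables (K : fieldType) (n : nat).
Notation A := 'rV[K]_n.

Definition ebase (i : 'I_n) : A := delta_mx 0 i.

Definition dpair (zeta y : A) : K := \sum_i zeta 0 i * y 0 i.

(* (f (x) g) s  for maps f g : A -> A *)
Definition tmap (f g : A -> A) (s : 'M[K]_n) : 'M[K]_n :=
  \sum_i \sum_j s i j *: ((f (ebase i))^T *m g (ebase j)).

Definition tpair (s : 'M[K]_n) (zeta eta : A) : K :=
  \sum_i \sum_j s i j * zeta 0 i * eta 0 j.

(* T_s : A^* -> A, <T_s zeta, eta> = <s, zeta (x) eta> *)
Definition Ts (s : 'M[K]_n) (zeta : A) : A := \row_j tpair s zeta (ebase j).

Definition tflip (s : 'M[K]_n) : 'M[K]_n := s^T.

(* f^* for f : A -> End(A):  <f^*(x) zeta, y> = - <zeta, f(x) y> *)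
Definition dualop (f : A -> A -> A) (x zeta : A) : A :=
  \row_j (- dpair zeta (f x (ebase j))).

Variables (succ prec : A -> A -> A).

Definition circ x y := succ x y + prec x y.
Definition Lsucc x y := succ x y.
Definition Rsucc x y := succ y x.
Definition Lcirc x y := circ x y.
Definition Rcirc x y := circ y x.
Definition Lstar x y := Lcirc x y + Rcirc x y.
Definition Lodot x y := Lsucc x y + prec y x.
Definition Rodot x y := Rsucc x y + prec x y.

Definition bilinear_op (op : A -> A -> A) : Prop :=
  (forall (a : K) u v y, op (a *: u + v) y = a *: op u y + op v y) /\
  (forall (a : K) x u v, op x (a *: u + v) = a *: op x u + op x v).

Definition anti_pre_Novikov : Prop :=
  bilinear_op succ /\ bilinear_op prec /\
  (forall x y z, succ (circ x y - circ y x) z = succ y (succ x z) - succ x (succ y z)) /\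
  (forall x y z, prec x (circ y z) = prec (succ y x) z - prec (prec x y) z - succ y (prec x z)) /\
  (forall x y z, succ (circ x y) z = - prec (succ x z) y) /\
  (forall x y z, prec (prec x y) z = prec (prec x z) y) /\
  (forall x y z, prec (circ x y - circ y x) z = succ x (circ y z) - succ y (circ x z)).

Definition invariant_tensor (s : 'M[K]_n) : Prop :=
  (forall x, tmap id (Lstar x) s - tmap (Lsucc x) id s = 0) /\
  (forall x, tmap (Lcirc x) id s - tmap id (Lodot x) s = 0).

End APN.

(* Main.v *)
Require Import Defs.
From HB Require Import structures.
From mathcomp Require Import all_boot all_order all_algebra.
Import GRing.Theory.
Set Implicit Arguments. Unset Strict Implicit. Unset Printing Implicit Defensive.
Local Open Scope ring_scope.

Definition lin2 (K : fieldType) (n : nat) (f : 'rV[K]_n -> 'rV[K]_n) :=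
  forall a u v, f (a *: u + v) = a *: f u + f v.
Definition mxof (K : fieldType) (n : nat) (f : 'rV[K]_n -> 'rV[K]_n) : 'M[K]_n :=
  \matrix_(j, l) f (ebase K j) 0 l.

Lemma lin_sum (K : fieldType) n (f : 'rV[K]_n -> 'rV[K]_n) : lin2 f ->
  forall v, f v = \sum_j v 0 j *: f (ebase K j).
Proof.
move=> H v.
have f0 : f 0 = 0.
  have := H 1 0 0; rewrite scaler0 addr0 scale1r => E.
  by apply/eqP; rewrite -(addrI (f 0) (etrans (addr0 _) E)).
have fD u w : f (u + w) = f u + f w by have := H 1 u w; rewrite !scale1r.
have fZ a u : f (a *: u) = a *: f u by have := H a u 0; rewrite !addr0 f0 addr0.
rewrite {1}(row_sum_delta v) (big_morph f fD f0).
by apply: eq_bigr => j _; rewrite fZ.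
Qed.

Lemma linE (K : fieldType) n (f : 'rV[K]_n -> 'rV[K]_n) : lin2 f -> forall v, f v = v *m mxof f.
Proof.
move=> H v; rewrite (lin_sum H v); apply/rowP => l.
rewrite !mxE summxE; apply: eq_bigr => j _; by rewrite !mxE.
Qed.

Lemma lin_first (K : fieldType) n (op : 'rV[K]_n -> 'rV[K]_n -> 'rV[K]_n) :
  (forall y, lin2 (fun x => op x y)) ->
  forall x, mxof (op x) = \sum_m x 0 m *: mxof (op (ebase K m)).
Proof.
move=> H x; apply/matrixP => j l.
rewrite !mxE summxE (lin_sum (H (ebase K j)) x) summxE.
by apply: eq_bigr => m _; rewrite !mxE.
Qed.

Lemma mxof_id (K : fieldType) n : mxof (@id 'rV[K]_n) = 1%:M.
Proof. by apply/matrixP => j l; rewrite !mxE /= eq_sym. Qed.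

Lemma Ts_mx (K : fieldType) n (s : 'M[K]_n) z : Ts s z = z *m s.
Proof.
apply/rowP => j; rewrite !mxE /tpair; apply: eq_bigr => i _.
rewrite (bigD1 j) //= big1 => [|k nk]; rewrite !mxE ?eqxx /=.
  by rewrite mulr1 addr0 mulrC.
by rewrite (negbTE nk) mulr0.
Qed.

Lemma tmap_mx (K : fieldType) n (f g : 'rV[K]_n -> 'rV[K]_n) s :
  tmap f g s = (mxof f)^T *m s *m mxof g.
Proof.
apply/matrixP => k l; rewrite /tmap !mxE summxE.
under eq_bigr do rewrite summxE.
under [RHS]eq_bigr do rewrite !mxE big_distrl /=.
rewrite exchange_big /=; apply: eq_bigr => i _; apply: eq_bigr => j _.
rewrite !mxE big_ord1 !mxE.
by rewrite mulrA [_ * f _ _ _]mulrC.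
Qed.

Lemma dual_comp (K : fieldType) n (f : 'rV[K]_n -> 'rV[K]_n -> 'rV[K]_n) x z m :
  dualop f x z 0 m = - ((f x (ebase K m)) *m z^T) 0 0.
Proof.
rewrite !mxE /dpair; congr (- _); apply: eq_bigr => k _; by rewrite !mxE mulrC.
Qed.

Lemma dualop_mx (K : fieldType) n (f : 'rV[K]_n -> 'rV[K]_n -> 'rV[K]_n) x z :
  dualop f x z = - (z *m (mxof (f x))^T).
Proof.
apply/rowP => j; rewrite !mxE /dpair; congr (- _); apply: eq_bigr => k _; by rewrite !mxE.
Qed.

Lemma rowmul0 (K : fieldType) n (M : 'M[K]_n) : (forall z : 'rV[K]_n, z *m M = 0) -> M = 0.
Proof.
move=> H; apply/row_matrixP => k; by rewrite rowE H row0.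
Qed.

Lemma bil0 (K : fieldType) n (M : 'M[K]_n) :
  (forall z w : 'rV[K]_n, (z *m M *m w^T) 0 0 = 0) -> M = 0.
Proof.
move=> H; apply/matrixP => k l; have := H (delta_mx 0 k) (delta_mx 0 l).
by rewrite -rowE trmx_delta -colE !mxE => ->.
Qed.

Lemma tr_sum (K : fieldType) n (c : 'I_n -> K) (M : 'I_n -> 'M[K]_n) :
  (\sum_m c m *: M m)^T = \sum_m c m *: (M m)^T.
Proof.
apply/matrixP => i j; rewrite !mxE !summxE; apply: eq_bigr => m _; by rewrite !mxE.
Qed.

Lemma ent (K : fieldType) (A B : 'M[K]_1) : (A - B) 0 0 = A 0 0 - B 0 0.
Proof. by rewrite !mxE. Qed.
Lemma entT (K : fieldType) (A : 'M[K]_1) : A^T 0 0 = A 0 0.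
Proof. by rewrite !mxE. Qed.

Theorem mainTheorem9 (K : fieldType) (n : nat) (succ prec : 'rV[K]_n -> 'rV[K]_n -> 'rV[K]_n)
  (s : 'M[K]_n) :
  anti_pre_Novikov succ prec ->
  (invariant_tensor succ prec s <->
     (forall (x zeta : 'rV[K]_n),
        Lstar succ prec x (Ts s zeta) + Ts s (dualop (@Lsucc K n succ) x zeta) = 0) /\
     (forall (x zeta : 'rV[K]_n),
        Lodot succ prec x (Ts s zeta) + Ts s (dualop (circ succ prec) x zeta) = 0)) /\
  ((forall (x zeta : 'rV[K]_n),
        Lstar succ prec x (Ts s zeta) + Ts s (dualop (@Lsucc K n succ) x zeta) = 0) /\
     (forall (x zeta : 'rV[K]_n),
        Lodot succ prec x (Ts s zeta) + Ts s (dualop (circ succ prec) x zeta) = 0)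
   <->
   (forall (zeta eta : 'rV[K]_n),
      dualop (Lstar succ prec) (Ts s zeta) eta
        = dualop (@Rsucc K n succ) (Ts (tflip s) eta) zeta) /\
   (forall (zeta eta : 'rV[K]_n),
      dualop (Rodot succ prec) (Ts s zeta) eta
        = dualop (Rcirc succ prec) (Ts (tflip s) eta) zeta)).
Proof.
move=> [[Hs1 Hs2] [[Hp1 Hp2] _]].
have Ls x : lin2 (succ x) by move=> a u v; apply: Hs2.
have Lsf y : lin2 (fun x => succ x y) by move=> a u v; apply: Hs1.
have Lc x a u v : circ succ prec x (a *: u + v) = a *: circ succ prec x u + circ succ prec x v.
  by rewrite /circ scalerDr Hs2 Hp2 addrACA.
have Lcf y a u v : circ succ prec (a *: u + v) y = a *: circ succ prec u y + circ succ prec v y.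
  by rewrite /circ scalerDr Hs1 Hp1 addrACA.
have Lst x : lin2 (Lstar succ prec x).
  by move=> a u v; rewrite /Lstar /Lcirc /Rcirc scalerDr Lc Lcf addrACA.
have Lstsym x y : Lstar succ prec x y = Lstar succ prec y x.
  by rewrite /Lstar /Lcirc /Rcirc addrC.
have Lstf y : lin2 (fun x => Lstar succ prec x y).
  by move=> a u v /=; rewrite !(Lstsym _ y) Lst.
have Lod x : lin2 (Lodot succ prec x).
  by move=> a u v; rewrite /Lodot /Lsucc scalerDr Hs2 Hp1 addrACA.
have Lodf y : lin2 (fun x => Lodot succ prec x y).
  by move=> a u v; rewrite /Lodot /Lsucc scalerDr Hs1 Hp2 addrACA.
have Lcc x : lin2 (circ succ prec x) by move=> a u v; apply: Lc.
pose Inv1 x := s *m mxof (Lstar succ prec x) - (mxof (succ x))^T *m s.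
pose Inv2 x := (mxof (circ succ prec x))^T *m s - s *m mxof (Lodot succ prec x).
have E0a x : tmap id (Lstar succ prec x) s - tmap (Lsucc succ x) id s = Inv1 x.
  by rewrite !tmap_mx mxof_id trmx1 mul1mx mulmx1.
have E0b x : tmap (Lcirc succ prec x) id s - tmap id (Lodot succ prec x) s = Inv2 x.
  by rewrite !tmap_mx mxof_id trmx1 mul1mx mulmx1.
have C1 x z : Lstar succ prec x (Ts s z) + Ts s (dualop (@Lsucc K n succ) x z) = z *m Inv1 x.
  rewrite !Ts_mx dualop_mx (linE (Lst x)) mulmxBr mulNmx !mulmxA.
  by [].
have C2 x z : Lodot succ prec x (Ts s z) + Ts s (dualop (circ succ prec) x z) = - (z *m Inv2 x).
  rewrite !Ts_mx dualop_mx (linE (Lod x)) mulmxBr mulNmx !mulmxA opprB addrC.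
  by [].
have C3 z w m : dualop (Lstar succ prec) (Ts s z) w 0 m
    - dualop (@Rsucc K n succ) (Ts (tflip s) w) z 0 m
    = - ((z *m Inv1 (ebase K m) *m w^T) 0 0).
  rewrite !dual_comp Lstsym /Rsucc (linE (Lst _)) (linE (Ls _)) !Ts_mx /tflip.
  rewrite -[X in _ - - X]entT !trmx_mul !trmxK mulmxBr mulmxBl ent !mulmxA opprB opprK addrC.
  done.
have C4 z w m : dualop (Rodot succ prec) (Ts s z) w 0 m
    - dualop (Rcirc succ prec) (Ts (tflip s) w) z 0 m
    = (z *m Inv2 (ebase K m) *m w^T) 0 0.
  rewrite !dual_comp.
  have -> : Rodot succ prec (Ts s z) (ebase K m) = Lodot succ prec (ebase K m) (Ts s z) by [].
  rewrite /Rcirc (linE (Lod _)) (linE (Lcc _)) !Ts_mx /tflip.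
  rewrite -[X in _ - - X]entT !trmx_mul !trmxK mulmxBr mulmxBl ent !mulmxA opprK addrC.
  done.
have S1 x : Inv1 x = \sum_m x 0 m *: Inv1 (ebase K m).
  rewrite /Inv1 (lin_first Lstf x) (lin_first Lsf x) mulmx_sumr tr_sum mulmx_suml.
  rewrite -sumrB; apply: eq_bigr => m _; by rewrite -scalemxAr scalemxAl scalerBr !scalemxAl.
have Lcf' y : lin2 (fun x => circ succ prec x y) by move=> a u v; apply: Lcf.
have S2 x : Inv2 x = \sum_m x 0 m *: Inv2 (ebase K m).
  rewrite /Inv2 (lin_first Lodf x) (lin_first Lcf' x) mulmx_sumr tr_sum mulmx_suml.
  rewrite -sumrB; apply: eq_bigr => m _; by rewrite -scalemxAr scalemxAl scalerBr !scalemxAl.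
have P1a : (forall x, Inv1 x = 0) <-> (forall m, Inv1 (ebase K m) = 0).
  split=> H x //; rewrite S1 big1 // => m _; by rewrite H scaler0.
have P2a : (forall x, Inv2 x = 0) <-> (forall m, Inv2 (ebase K m) = 0).
  split=> H x //; rewrite S2 big1 // => m _; by rewrite H scaler0.
have I1 : invariant_tensor succ prec s <-> (forall x, Inv1 x = 0) /\ (forall x, Inv2 x = 0).
  rewrite /invariant_tensor; split=> [[H1 H2]|[H1 H2]]; split=> x.
  - by rewrite -E0a H1.
  - by rewrite -E0b H2.
  - by rewrite E0a H1.
  - by rewrite E0b H2.
have I2 : (forall (x zeta : 'rV[K]_n),
        Lstar succ prec x (Ts s zeta) + Ts s (dualop (@Lsucc K n succ) x zeta) = 0) /\
     (forall (x zeta : 'rV[K]_n),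
        Lodot succ prec x (Ts s zeta) + Ts s (dualop (circ succ prec) x zeta) = 0)
   <-> (forall x, Inv1 x = 0) /\ (forall x, Inv2 x = 0).
  split=> [[H1 H2]|[H1 H2]]; split=> x.
  - by apply: rowmul0 => z; rewrite -C1.
  - by apply: rowmul0 => z; apply/eqP; rewrite -oppr_eq0 -C2 H2.
  - by move=> z; rewrite C1 H1 mulmx0.
  - by move=> z; rewrite C2 H2 mulmx0 oppr0.
have I3 : (forall (zeta eta : 'rV[K]_n),
      dualop (Lstar succ prec) (Ts s zeta) eta
        = dualop (@Rsucc K n succ) (Ts (tflip s) eta) zeta) /\
   (forall (zeta eta : 'rV[K]_n),
      dualop (Rodot succ prec) (Ts s zeta) eta
        = dualop (Rcirc succ prec) (Ts (tflip s) eta) zeta)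
   <-> (forall m, Inv1 (ebase K m) = 0) /\ (forall m, Inv2 (ebase K m) = 0).
  split=> [[H1 H2]|[H1 H2]]; split.
  - move=> m; apply: bil0 => z w; apply/eqP; rewrite -oppr_eq0 -C3 H1 subrr //.
  - move=> m; apply: bil0 => z w; by rewrite -C4 H2 subrr.
  - move=> z w; apply/rowP => m; apply/eqP; rewrite -subr_eq0 C3 H1 mulmx0 mul0mx mxE oppr0 //.
  - move=> z w; apply/rowP => m; apply/eqP; rewrite -subr_eq0 C4 H2 mulmx0 mul0mx mxE //.
move: I1 I2 I3 P1a P2a; clear; tauto.
Qed.
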